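(* Let $\{a_n\}_{n\ge1}$ be a sequence of positive real numbers and let $\lambda>0$. Suppose that \[ \frac{a_{2n}}{a_n}=\frac12-\frac{\beta_1}{\ln(\lambda n)}+\frac{\epsilon_1(n)}{\ln(\lambda n)},\qquad \frac{a_{2n+1}}{a_n}=\frac12-\frac{\beta_2}{\ln(\lambda n)}+\frac{\epsilon_2(n)}{\ln(\lambda n)}, \] where $\beta_1,\beta_2$ are real constants independent of $n$ and $\epsilon_1(n)\to0$, $\epsilon_2(n)\to0$ as $n\to\infty$. Let $m=\min\{\beta_1,\beta_2\}$ and $M=\max\{\beta_1,\beta_2\}$. Then: (i) if $m>\frac{\ln2}{2}$, then $\sum_{n=1}^\infty a_n$ converges; (ii) if $M<\frac{\ln2}{2}$, then $\sum_{n=1}^\infty a_n$ diverges.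
   Context: Here $\ln$ denotes the natural logarithm. *)

(* Defs.v *)
From Stdlib Require Import Reals.
From Coquelicot Require Import Coquelicot.

(* Main.v *)
Require Import Defs.
From Stdlib Require Import Reals Lra Lia.
From Coquelicot Require Import Coquelicot.
Open Scope R_scope.
Open Scope R_scope.

Fixpoint sumf (f : nat -> R) (n : nat) : R :=
  match n with O => 0 | S n => sumf f n + f n end.

Lemma sumf_ext f g n : (forall i, (i < n)%nat -> f i = g i) -> sumf f n = sumf g n.
Proof. induction n; simpl; intros H; [reflexivity|]. rewrite IHn by (intros; apply H; lia). rewrite H by lia. reflexivity. Qed.

Lemma sumf_le f g n : (forall i, (i < n)%nat -> f i <= g i) -> sumf f n <= sumf g n.
Proof. induction n; simpl; intros H; [lra|]. assert (sumf f n <= sumf g n) by (apply IHn; intros; apply H; lia). assert (f n <= g n) by (apply H; lia). lra. Qed.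

Lemma sumf_scal c f n : sumf (fun i => c * f i) n = c * sumf f n.
Proof. induction n; simpl; [ring|rewrite IHn; ring]. Qed.

Lemma sumf_const c n : sumf (fun _ => c) n = INR n * c.
Proof. induction n; simpl sumf; [simpl; ring|rewrite IHn, S_INR; ring]. Qed.

Lemma sumf_nonneg f n : (forall i, (i<n)%nat -> 0 <= f i) -> 0 <= sumf f n.
Proof. intros H. replace 0 with (sumf (fun _ => 0) n). apply sumf_le; auto. rewrite sumf_const; ring. Qed.

Lemma sumf_pos f n : (0 < n)%nat -> (forall i, (i<n)%nat -> 0 < f i) -> 0 < sumf f n.
Proof. destruct n; intros Hn H; [lia|]. simpl.
  assert (0 <= sumf f n) by (apply sumf_nonneg; intros; left; apply H; lia).
  assert (0 < f n) by (apply H; lia). lra. Qed.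

Lemma sumf_add f m l : sumf f (m + l) = sumf f m + sumf (fun i => f (m + i)%nat) l.
Proof. induction l; simpl. rewrite Nat.add_0_r; ring. rewrite Nat.add_succ_r; simpl; rewrite IHl; ring. Qed.

Lemma sumf_mono f m l : (forall i, 0 <= f i) -> sumf f m <= sumf f (m + l).
Proof. intros H; rewrite sumf_add. assert (0 <= sumf (fun i => f (m+i)%nat) l) by (apply sumf_nonneg; auto). lra. Qed.

Lemma sumf_double g m l : sumf (fun i => g (2*m + i)%nat) (2*l)%nat = sumf (fun i => g (2*(m+i))%nat + g (2*(m+i)+1)%nat) l.
Proof. induction l. reflexivity.
 replace (2 * S l)%nat with (S (S (2*l))) by lia. cbn [sumf]. rewrite IHl.
 replace (2*m + S (2*l))%nat with (2*(m+l)+1)%nat by lia.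
 replace (2*m + 2*l)%nat with (2*(m+l))%nat by lia. ring. Qed.

Lemma sumf_R0 f n : sum_f_R0 f n = sumf f (S n).
Proof. induction n. simpl. ring. change (sum_f_R0 f (S n)) with (sum_f_R0 f n + f (S n)). rewrite IHn. reflexivity. Qed.

Lemma pow2_pos k : (1 <= 2 ^ k)%nat.
Proof. pose proof (Nat.pow_gt_lin_r 2 k). lia. Qed.

Definition blk (a : nat -> R) k := sumf (fun i => a (2^k + i)%nat) (2^k)%nat.

Lemma blocks a K : sumf (fun i => a (S i)) (2^K - 1)%nat = sumf (blk a) K.
Proof. induction K. reflexivity.
  pose proof (pow2_pos K).
  replace (2 ^ S K - 1)%nat with ((2^K - 1) + 2^K)%nat by (rewrite Nat.pow_succ_r'; lia).
  rewrite sumf_add, IHK. simpl (sumf (blk a) (S K)). f_equal. unfold blk.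
  apply sumf_ext. intros i Hi. f_equal. lia. Qed.

Lemma blk_succ a k : blk a (S k) = sumf (fun i => a (2*(2^k+i))%nat + a (2*(2^k+i)+1)%nat) (2^k)%nat.
Proof. unfold blk. rewrite Nat.pow_succ_r'. apply (sumf_double a). Qed.

Lemma blk_upper a r k : (forall i, (i < 2^k)%nat -> a (2*(2^k+i))%nat + a(2*(2^k+i)+1)%nat <= r * a (2^k+i)%nat) -> blk a (S k) <= r * blk a k.
Proof. intros H. rewrite blk_succ. unfold blk. rewrite <- sumf_scal. apply sumf_le. exact H. Qed.

Lemma blk_lower a r k : (forall i, (i < 2^k)%nat -> r * a (2^k+i)%nat <= a (2*(2^k+i))%nat + a(2*(2^k+i)+1)%nat) -> r * blk a k <= blk a (S k).
Proof. intros H. rewrite blk_succ. unfold blk. rewrite <- sumf_scal. apply sumf_le. exact H. Qed.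

Lemma blk_pos a k : (forall n, (1 <= n)%nat -> 0 < a n) -> 0 < blk a k.
Proof. intros H. pose proof (pow2_pos k). unfold blk. apply sumf_pos. lia. intros; apply H; lia. Qed.

Lemma archi x : exists K : nat, x < INR K.
Proof. destruct (Rle_or_lt x 0) as [H|H].
  - exists 1%nat. simpl. lra.
  - destruct (archimed_cor1 (/ x)) as [N [HN1 HN2]]. apply Rinv_0_lt_compat; lra.
    exists N. destruct (Rle_or_lt (INR N) x) as [H'|H']; [|exact H'].
    exfalso. assert (0 < INR N) by (apply lt_0_INR; lia).
    pose proof (Rinv_le_contravar _ _ H0 H'). lra. Qed.

Lemma ln2_pos : 0 < ln 2.
Proof. rewrite <- ln_1. apply ln_increasing; lra. Qed.

Lemma L_bounds lam k i : 0 < lam -> (i < 2^k)%nat ->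
  ln lam + INR k * ln 2 <= ln (lam * INR (2^k + i)) <= ln lam + (INR k + 1) * ln 2.
Proof. intros Hl Hi. pose proof (pow2_pos k).
  assert (Hn : 0 < INR (2^k + i)) by (apply lt_0_INR; lia).
  rewrite ln_mult by lra.
  assert (E1 : INR (2^k) = 2 ^ k) by (rewrite pow_INR; simpl; f_equal; ring).
  assert (E2 : INR (2^(S k)) = 2 ^ (S k)) by (rewrite pow_INR; simpl; f_equal; ring).
  assert (ln (2 ^ k) = INR k * ln 2) by (apply ln_pow; lra).
  assert (ln (2 ^ S k) = (INR k + 1) * ln 2) by (rewrite ln_pow, S_INR by lra; ring).
  split.
  - rewrite <- H0, <- E1. assert (ln (INR (2^k)) <= ln (INR (2^k+i))).
    { apply ln_le. apply lt_0_INR; lia. apply le_INR; lia. } lra.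
  - rewrite <- H1, <- E2. assert (ln (INR (2^k+i)) <= ln (INR (2^S k))).
    { apply ln_le. lra. apply le_INR. rewrite Nat.pow_succ_r'. lia. } lra.
Qed.

Lemma conv_step (B e δ L kk d l2 : R): 0 < l2 -> 0 < L -> L <= (kk+d)*l2 -> Rabs e < δ -> 0 < B - δ ->
  1 - (B - e)/L <= 1 - ((B-δ)/l2)/(kk+d).
Proof. intros H1 H2 H3 H4 H5.
  assert (Hc : 0 < kk + d). { destruct (Rle_or_lt (kk+d) 0); auto.
     assert ((kk+d)*l2 <= 0) by (apply Rmult_le_0_r; lra). lra. }
  replace ((B-δ)/l2/(kk+d)) with ((B-δ)/((kk+d)*l2)) by (field; lra).
  assert ((B-δ)/((kk+d)*l2) <= (B-δ)/L).
  { unfold Rdiv; apply Rmult_le_compat_l; [lra|apply Rinv_le_contravar; lra]. }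
  assert ((B-δ)/L <= (B-e)/L).
  { unfold Rdiv; apply Rmult_le_compat_r. left; apply Rinv_0_lt_compat; lra.
    pose proof (Rle_abs e). lra. }
  lra. Qed.

Lemma div_step (B e δ L kk d l2 : R): 0 < l2 -> 0 < kk + d -> (kk+d)*l2 <= L -> Rabs e < δ ->
  1 - Rmax (B+δ) 0 / l2 / (kk+d) <= 1 - (B-e)/L.
Proof. intros H1 H2 H3 H4.
  pose proof (Rmax_l (B+δ) 0). pose proof (Rmax_r (B+δ) 0). set (c := Rmax (B+δ) 0) in *.
  assert (0 < (kk+d)*l2) by (apply Rmult_lt_0_compat; lra).
  replace (c/l2/(kk+d)) with (c/((kk+d)*l2)) by (field; lra).
  assert ((B-e)/L <= c/L).
  { unfold Rdiv; apply Rmult_le_compat_r. left; apply Rinv_0_lt_compat; lra.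
    pose proof (Rle_abs (-e)) as Hq. rewrite Rabs_Ropp in Hq. lra. }
  assert (c/L <= c/((kk+d)*l2)).
  { unfold Rdiv; apply Rmult_le_compat_l; [lra|apply Rinv_le_contravar; lra]. }
  lra. Qed.
Theorem corollary2p1p1 (a : nat -> R) (lam beta1 beta2 : R)
  (eps1 eps2 : nat -> R)
  (Hpos : forall n : nat, (1 <= n)%nat -> 0 < a n)
  (Hlam : 0 < lam)
  (Heps1 : is_lim_seq eps1 0)
  (Heps2 : is_lim_seq eps2 0)
  (Heven : forall n : nat, (1 <= n)%nat ->
     a (2 * n)%nat / a n
     = / 2 - beta1 / ln (lam * INR n) + eps1 n / ln (lam * INR n))
  (Hodd : forall n : nat, (1 <= n)%nat ->
     a (2 * n + 1)%nat / a n
     = / 2 - beta2 / ln (lam * INR n) + eps2 n / ln (lam * INR n)) :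
  (ln 2 / 2 < Rmin beta1 beta2 -> ex_series (fun k => a (S k))) /\
  (Rmax beta1 beta2 < ln 2 / 2 -> ~ ex_series (fun k => a (S k))).
Proof.
  set (u := fun k => a (S k)).
  assert (Hu : forall i, 0 <= u i) by (intros; left; apply Hpos; lia).
  assert (Hbn : forall k, 0 <= blk a k) by (intros; left; apply blk_pos; auto).
  pose proof ln2_pos as Hl2.
  set (B := beta1 + beta2).
  assert (Hpair : forall n, (1 <= n)%nat -> a (2*n)%nat + a (2*n+1)%nat
      = a n * (1 - (B - (eps1 n + eps2 n)) / ln (lam * INR n))).
  { intros n Hn. pose proof (Hpos n Hn).
    assert (E1 : a (2*n)%nat = a (2*n)%nat / a n * a n) by (field; lra).
    assert (E2 : a (2*n+1)%nat = a (2*n+1)%nat / a n * a n) by (field; lra).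
    rewrite E1, E2, Heven, Hodd by exact Hn. unfold B, Rdiv. lra. }
  apply is_lim_seq_spec in Heps1. apply is_lim_seq_spec in Heps2.
  assert (Heps : forall δ, 0 < δ -> exists N, forall n, (N <= n)%nat -> Rabs (eps1 n + eps2 n) < δ).
  { intros δ Hδ.
    destruct (Heps1 (mkposreal (δ/2) ltac:(lra))) as [N1 HN1].
    destruct (Heps2 (mkposreal (δ/2) ltac:(lra))) as [N2 HN2].
    exists (N1+N2)%nat. intros n Hn. specialize (HN1 n ltac:(lia)). specialize (HN2 n ltac:(lia)).
    simpl in HN1, HN2. rewrite Rminus_0_r in HN1, HN2.
    pose proof (Rabs_triang (eps1 n) (eps2 n)). lra. }
  assert (HK : forall X N, exists K0, (1 <= K0)%nat /\ X < INR K0 /\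
             forall k i, (K0 <= k)%nat -> (N <= 2^k + i)%nat).
  { intros X N. destruct (archi X) as [K HK]. exists (K + N + 1)%nat. split; [lia|]. split.
    - apply Rlt_le_trans with (INR K); auto. apply le_INR; lia.
    - intros k i Hk. pose proof (Nat.pow_gt_lin_r 2 k ltac:(lia)). lia. }
  set (A := Rabs (ln lam)).
  assert (HA : 0 <= A) by apply Rabs_pos.
  assert (HAd : A / ln 2 * ln 2 = A) by (field; lra).
  assert (HA2 : 0 <= A / ln 2).
  { unfold Rdiv; apply Rmult_le_pos; [auto| left; apply Rinv_0_lt_compat; auto]. }
  pose proof (Rle_abs (ln lam)) as Hab1. pose proof (Rle_abs (- ln lam)) as Hab2.
  rewrite Rabs_Ropp in Hab2. fold A in Hab1, Hab2.
  split.
  - intros Hm.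
    assert (HB : ln 2 < B).
    { unfold B. pose proof (Rmin_l beta1 beta2). pose proof (Rmin_r beta1 beta2). lra. }
    set (δ := (B - ln 2)/2).
    assert (Hδ : 0 < δ) by (unfold δ; lra).
    set (γ := (B - δ)/ln 2).
    assert (Hγ : 1 < γ).
    { unfold γ. apply (Rmult_lt_reg_r (ln 2)); auto. unfold Rdiv.
      rewrite Rmult_assoc, Rinv_l, Rmult_1_r by lra. unfold δ; lra. }
    set (d := 1 + A / ln 2).
    destruct (Heps δ Hδ) as [N HN].
    destruct (HK (A / ln 2) N) as [K0 [HK01 [HK0X HK0N]]].
    assert (Hstep : forall k, (K0 <= k)%nat -> blk a (S k) <= (1 - γ / (INR k + d)) * blk a k).
    { intros k Hk. apply blk_upper. intros i Hi.
      pose proof (pow2_pos k).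
      rewrite Hpair by lia. rewrite Rmult_comm. apply Rmult_le_compat_r. left; apply Hpos; lia.
      destruct (L_bounds lam k i Hlam Hi) as [HL1 HL2].
      assert (Hkk : A / ln 2 < INR k).
      { apply Rlt_le_trans with (INR K0); auto. apply le_INR; lia. }
      assert (A < INR k * ln 2). { rewrite <- HAd at 1. apply Rmult_lt_compat_r; auto. }
      assert (Ed : (INR k + d) * ln 2 = INR k * ln 2 + ln 2 + A) by (unfold d; field; lra).
      unfold γ. apply conv_step; auto.
      all: first [lra | (apply HN; apply HK0N; lia) | (unfold δ; lra)]. }
    set (T := fun k => (INR k + d - 1) * blk a k).
    assert (HT0 : forall k, 0 <= T k).
    { intros k. unfold T. apply Rmult_le_pos; auto. pose proof (pos_INR k). unfold d. lra. }
    assert (HTs : forall k, (K0 <= k)%nat -> T (S k) <= T k - (γ - 1) * blk a k).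
    { intros k Hk. pose proof (Hstep k Hk). unfold T. rewrite S_INR.
      assert (Hkd : 0 < INR k + d) by (pose proof (pos_INR k); unfold d; lra).
      replace (INR k + 1 + d - 1) with (INR k + d) by ring.
      apply Rle_trans with ((INR k + d) * ((1 - γ / (INR k + d)) * blk a k)).
      - apply Rmult_le_compat_l; lra.
      - right. field. lra. }
    assert (Hsum : forall j, (γ - 1) * sumf (fun i => blk a (K0 + i)%nat) j + T (K0 + j)%nat <= T K0).
    { induction j.
      - cbn [sumf]. rewrite Nat.add_0_r. lra.
      - cbn [sumf]. rewrite Nat.add_succ_r. pose proof (HTs (K0 + j)%nat ltac:(lia)). lra. }
    set (M := sumf (blk a) K0 + T K0 / (γ - 1)).
    assert (HbM : forall K, sumf (blk a) K <= M).
    { intros K. apply Rle_trans with (sumf (blk a) (K0 + K)).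
      - rewrite Nat.add_comm. apply sumf_mono; auto.
      - rewrite sumf_add. unfold M. apply Rplus_le_compat_l.
        pose proof (Hsum K). pose proof (HT0 (K0+K)%nat).
        apply (Rmult_le_reg_l (γ - 1)); [lra|].
        replace ((γ - 1) * (T K0 / (γ - 1))) with (T K0) by (field; lra). lra. }
    assert (HPM : forall N0, sumf u N0 <= M).
    { intros N0. pose proof (Nat.pow_gt_lin_r 2 N0 ltac:(lia)).
      apply Rle_trans with (sumf u (2^N0 - 1)%nat).
      - replace (2^N0 - 1)%nat with (N0 + (2^N0 - 1 - N0))%nat by lia. apply sumf_mono; auto.
      - unfold u. rewrite blocks. auto. }
    assert (Hg : Un_growing (sum_f_R0 u)).
    { intros n. change (sum_f_R0 u (S n)) with (sum_f_R0 u n + u (S n)). pose proof (Hu (S n)). lra. }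
    assert (Hb : has_ub (sum_f_R0 u)).
    { unfold has_ub, bound. exists M. unfold is_upper_bound. intros x [i ->]. rewrite sumf_R0. apply HPM. }
    destruct (growing_cv _ Hg Hb) as [l Hl]. exists l. apply is_series_Reals. exact Hl.
  - intros HM Hex.
    assert (HB : B < ln 2).
    { unfold B. pose proof (Rmax_l beta1 beta2). pose proof (Rmax_r beta1 beta2). lra. }
    set (δ := (ln 2 - B)/2).
    assert (Hδ : 0 < δ) by (unfold δ; lra).
    set (c := Rmax (B + δ) 0).
    set (γ := c / ln 2).
    assert (Hγ : γ <= 1).
    { unfold γ. assert (c < ln 2) by (apply Rmax_lub_lt; unfold δ; lra).
      apply (Rmult_le_reg_r (ln 2)); auto. unfold Rdiv.
      rewrite Rmult_assoc, Rinv_l, Rmult_1_r by lra. lra. }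
    set (d := - (A / ln 2)).
    destruct (Heps δ Hδ) as [N HN].
    destruct (HK (A / ln 2 + 1) N) as [K0 [HK01 [HK0X HK0N]]].
    assert (Hkd : forall k, (K0 <= k)%nat -> 1 < INR k + d).
    { intros k Hk. assert (INR K0 <= INR k) by (apply le_INR; lia). unfold d; lra. }
    assert (Hstep : forall k, (K0 <= k)%nat -> (1 - γ / (INR k + d)) * blk a k <= blk a (S k)).
    { intros k Hk. apply blk_lower. intros i Hi. pose proof (pow2_pos k).
      rewrite Hpair by lia. rewrite (Rmult_comm (a (2^k+i)%nat)).
      apply Rmult_le_compat_r. left; apply Hpos; lia.
      destruct (L_bounds lam k i Hlam Hi) as [HL1 HL2].
      assert (Ed : (INR k + d) * ln 2 = INR k * ln 2 - A) by (unfold d; field; lra).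
      unfold γ, c. apply div_step; auto.
      all: first [(specialize (Hkd k Hk); lra) | lra | (apply HN; apply HK0N; lia)]. }
    set (T := fun k => (INR k + d - 1) * blk a k).
    assert (HTs : forall k, (K0 <= k)%nat -> T k <= T (S k)).
    { intros k Hk. pose proof (Hstep k Hk). pose proof (Hkd k Hk). pose proof (Hbn k).
      unfold T. rewrite S_INR. replace (INR k + 1 + d - 1) with (INR k + d) by ring.
      apply Rle_trans with ((INR k + d) * ((1 - γ / (INR k + d)) * blk a k)).
      - replace ((INR k + d) * ((1 - γ / (INR k + d)) * blk a k)) with ((INR k + d - γ) * blk a k)
          by (field; lra).
        apply Rmult_le_compat_r; lra.
      - apply Rmult_le_compat_l; lra. }
    assert (HTj : forall j, T K0 <= T (K0 + j)%nat).
    { induction j.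
      - rewrite Nat.add_0_r; lra.
      - rewrite Nat.add_succ_r. pose proof (HTs (K0+j)%nat ltac:(lia)). lra. }
    assert (Hτ : 0 < T K0).
    { unfold T. apply Rmult_lt_0_compat.
      - specialize (Hkd K0 (le_n _)); lra.
      - apply blk_pos; auto. }
    set (τ := T K0) in *.
    assert (Hlow : forall k, (K0 <= k)%nat -> τ <= blk a k * INR k).
    { intros k Hk. pose proof (HTj (k - K0)%nat) as H.
      replace (K0 + (k - K0))%nat with k in H by lia. unfold T in H.
      assert (d <= 0) by (unfold d; lra).
      pose proof (Hbn k). pose proof (Hkd k Hk).
      apply Rle_trans with ((INR k + d - 1) * blk a k); auto.
      rewrite (Rmult_comm (blk a k)). apply Rmult_le_compat_r; lra. }
    assert (Hharm : forall K, (K0 <= K)%nat -> τ / 2 <= sumf (fun i => blk a (K + i)%nat) K).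
    { intros K HK'. assert (HKp : 0 < INR K) by (apply lt_0_INR; lia).
      apply Rle_trans with (sumf (fun _ => τ / (2 * INR K)) K).
      - rewrite sumf_const. right. field. lra.
      - apply sumf_le. intros i Hi. pose proof (Hlow (K+i)%nat ltac:(lia)). pose proof (Hbn (K+i)%nat).
        assert (INR (K+i) <= 2 * INR K).
        { rewrite plus_INR. assert (INR i <= INR K) by (apply le_INR; lia). lra. }
        assert (τ <= blk a (K+i)%nat * (2 * INR K)).
        { apply Rle_trans with (blk a (K+i)%nat * INR (K+i)); auto. apply Rmult_le_compat_l; auto. }
        apply (Rmult_le_reg_r (2 * INR K)). lra.
        replace (τ / (2 * INR K) * (2 * INR K)) with τ by (field; lra). auto. }
    assert (Hgrow : forall j, INR j * (τ / 2) <= sumf (blk a) (2^j * K0)%nat).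
    { induction j.
      - change (INR 0) with 0. rewrite Rmult_0_l. apply sumf_nonneg; auto.
      - rewrite S_INR. replace (2 ^ S j * K0)%nat with (2^j*K0 + 2^j*K0)%nat
          by (rewrite Nat.pow_succ_r'; lia).
        rewrite sumf_add. pose proof (pow2_pos j). pose proof (Hharm (2^j*K0)%nat ltac:(nia)). lra. }
    destruct Hex as [l Hl]. apply is_series_Reals in Hl.
    destruct (Hl 1 Rlt_0_1) as [N1 HN1].
    assert (Hbd : forall n, sumf u n <= l + 1).
    { intros n. apply Rle_trans with (sumf u (S (n + N1))).
      - replace (S (n+N1)) with (n + S N1)%nat by lia. apply sumf_mono; auto.
      - rewrite <- sumf_R0. specialize (HN1 (n+N1)%nat ltac:(lia)). unfold Rdist in HN1.
        apply Rabs_def2 in HN1. lra. }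
    destruct (archi (2 * (l+1) / τ)) as [j Hj].
    pose proof (Hbd (2^(2^j*K0) - 1)%nat) as H1. unfold u in H1. rewrite blocks in H1.
    pose proof (Hgrow j).
    assert (l + 1 < INR j * (τ/2)).
    { apply (Rmult_lt_compat_r (τ/2)) in Hj; [|lra].
      replace (2 * (l+1)/τ * (τ/2)) with (l+1) in Hj by (field; lra). exact Hj. }
    lra.
Qed.
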